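(* Let $\mathcal{X}\subseteq\mathbb{R}^D$, let $k:\mathcal{X}\times\mathcal{X}\to\mathbb{R}$ be an arbitrary positive definite kernel with reproducing kernel Hilbert space $\mathcal{H}_k$, and suppose $s\in\mathcal{H}_k$. Let $\mathbf{X}=\{\mathbf{x}_1,\dots,\mathbf{x}_N\}\subset\mathcal{X}$ and let the measurements be $y_i=s(\mathbf{x}_i)+\epsilon_i$, $i=1,\dots,N$, where the noise is bounded: $\epsilon_i^2<\sigma_\epsilon^2$ for all $i$. Then for every $\mathbf{x}\in\mathcal{X}$, $$E(\mathbf{x}\mid\mathbf{y}_{\mathbf{X}})\le \|s\|_{\mathcal{H}_k}\,P_{\mathbf{X}}(\mathbf{x})+\sqrt{\sigma_\epsilon^2\,N\,\Lambda_k^2(\mathbf{x})},$$ where $P_{\mathbf{X}}(\mathbf{x})=\sqrt{\sigma^2(\mathbf{x},\mathbf{x}\mid\mathbf{y}_{\mathbf{X}})}$ is the power function of $\mathbf{X}$ and $\Lambda_k(\mathbf{x})=\|K_{\mathbf{X}}^{-1}\mathbf{k}_{\mathbf{X}}(\mathbf{x})\|$ (Euclidean norm).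
   Context: A function $k:\mathcal{X}\times\mathcal{X}\to\mathbb{R}$ is positive definite if for every finite $\mathbf{X}\subset\mathcal{X}$ the matrix $[K_{\mathbf{X}}]_{i,j}=k(\mathbf{x}_i,\mathbf{x}_j)$ is positive definite. Notation: $[\mathbf{k}_{\mathbf{X}}(\mathbf{x})]_i=k(\mathbf{x},\mathbf{x}_i)$, $[\mathbf{y}_{\mathbf{X}}]_i=y_i$. The (zero-mean prior) Gaussian process regression estimate has mean $\mu(\mathbf{x}\mid\mathbf{y}_{\mathbf{X}})=\mathbf{k}_{\mathbf{X}}^{T}(\mathbf{x})K_{\mathbf{X}}^{-1}\mathbf{y}_{\mathbf{X}}$ and covariance $\sigma^2(\mathbf{x},\mathbf{x}'\mid\mathbf{y}_{\mathbf{X}})=k(\mathbf{x},\mathbf{x}')-\mathbf{k}_{\mathbf{X}}^{T}(\mathbf{x})K_{\mathbf{X}}^{-1}\mathbf{k}_{\mathbf{X}}(\mathbf{x}')$. The deterministic error is $E(\mathbf{x}\mid\mathbf{y}_{\mathbf{X}})=|s(\mathbf{x})-\mu(\mathbf{x}\mid\mathbf{y}_{\mathbf{X}})|$. *)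

(* Defs.v *)
From HB Require Import structures.
From mathcomp Require Import all_boot all_order all_algebra.
From mathcomp Require Import reals.
Set Implicit Arguments. Unset Strict Implicit. Unset Printing Implicit Defensive.
Import Order.TTheory GRing.Theory Num.Theory.
Local Open Scope ring_scope.

Section Kernels.
Variables (R : realType) (T : Type).

Definition gram (k : T -> T -> R) n (p : 'I_n -> T) : 'M[R]_n :=
  \matrix_(i, j) k (p i) (p j).

Definition pd_kernel (k : T -> T -> R) : Prop :=
  forall n (p : 'I_n -> T), injective p ->
    forall v : 'cV[R]_n, v != 0 -> 0 < (v^T *m gram k p *m v) ord0 ord0.

Definition kvec (k : T -> T -> R) n (p : 'I_n -> T) (x : T) : 'cV[R]_n :=
  \col_i k x (p i).

Definition gp_mean (k : T -> T -> R) n (p : 'I_n -> T) (y : 'cV[R]_n) (x : T) : R :=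
  ((kvec k p x)^T *m invmx (gram k p) *m y) ord0 ord0.

Definition gp_cov (k : T -> T -> R) n (p : 'I_n -> T) (x x' : T) : R :=
  k x x' - ((kvec k p x)^T *m invmx (gram k p) *m kvec k p x') ord0 ord0.

Definition power_fun (k : T -> T -> R) n (p : 'I_n -> T) (x : T) : R :=
  Num.sqrt (gp_cov k p x x).

Definition eucl_norm n (v : 'cV[R]_n) : R := Num.sqrt (\sum_i (v i ord0) ^+ 2).

Definition lebesgue_fun (k : T -> T -> R) n (p : 'I_n -> T) (x : T) : R :=
  eucl_norm (invmx (gram k p) *m kvec k p x).

(* By the
   Moore–Aronszajn theorem such a space is unique, namely H_k. *)
Record is_RKHS (k : T -> T -> R) (Hs : (T -> R) -> Prop)
    (ip : (T -> R) -> (T -> R) -> R) : Prop := {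
  rkhs_0 : Hs (fun _ => 0);
  rkhs_lin : forall (a : R) f g, Hs f -> Hs g -> Hs (fun t => a * f t + g t);
  rkhs_sym : forall f g, Hs f -> Hs g -> ip f g = ip g f;
  rkhs_linl : forall (a : R) f g h, Hs f -> Hs g -> Hs h ->
      ip (fun t => a * f t + g t) h = a * ip f h + ip g h;
  rkhs_pos : forall f, Hs f -> 0 <= ip f f;
  rkhs_def : forall f, Hs f -> ip f f = 0 -> f = (fun _ => 0);
  rkhs_complete : forall u : nat -> T -> R, (forall m, Hs (u m)) ->
      (forall e : R, 0 < e -> exists M, forall m n, (M <= m)%N -> (M <= n)%N ->
          Num.sqrt (ip (fun t => u m t - u n t) (fun t => u m t - u n t)) < e) ->
      exists f, Hs f /\ forall e : R, 0 < e -> exists M, forall n, (M <= n)%N ->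
          Num.sqrt (ip (fun t => u n t - f t) (fun t => u n t - f t)) < e;
  rkhs_kmem : forall x, Hs (fun t => k t x);
  rkhs_repr : forall f x, Hs f -> ip f (fun t => k t x) = f x
}.

Definition rkhs_norm (ip : (T -> R) -> (T -> R) -> R) (f : T -> R) : R :=
  Num.sqrt (ip f f).

End Kernels.

(* Main.v *)
Require Import Defs.
From HB Require Import structures.
From mathcomp Require Import all_boot all_order all_algebra.
From mathcomp Require Import reals.
From mathcomp Require Import ring lra.
From Stdlib Require Import FunctionalExtensionality.
Import Order.TTheory GRing.Theory Num.Theory.
Local Open Scope ring_scope.

Lemma quad_cs (R : realType) (A B C : R) :
  (forall t : R, 0 <= A * t ^+ 2 + 2 * B * t + C) -> 0 <= A -> 0 <= C ->
  `|B| <= Num.sqrt A * Num.sqrt C.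
Proof.
move=> H hA hC.
have key : B ^+ 2 <= A * C.
  have [A0|Apos] := eqVneq A 0.
    case: (eqVneq B 0) => [->|Bn0]; first by rewrite A0 expr0n /= mul0r.
    have := H (- (C + 1) / (2 * B)).
    rewrite A0 mul0r add0r.
    have -> : 2 * B * (- (C + 1) / (2 * B)) = - (C + 1).
      field; done.
    lra.
  have Ap : 0 < A by rewrite lt_def Apos hA.
  have := H (- B / A).
  have -> : A * (- B / A) ^+ 2 + 2 * B * (- B / A) + C = C - B ^+ 2 / A.
    by field.
  rewrite subr_ge0 ler_pdivrMr // => h.
  by rewrite mulrC.
rewrite -sqrtrM // -sqrtr_sqr.
exact: ler_wsqrtr.
Qed.
Section RK.
Variables (R : realType) (T : Type) (k : T -> T -> R) (Hs : (T -> R) -> Prop)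
  (ip : (T -> R) -> (T -> R) -> R).
Hypothesis HR : is_RKHS k Hs ip.

Lemma ip0l h : Hs h -> ip (fun _ => 0) h = 0.
Proof.
move=> hh.
have := rkhs_linl HR 1 (rkhs_0 HR) (rkhs_0 HR) hh.
have -> : (fun t : T => 1 * (fun _ : T => 0 : R) t + (fun _ : T => 0) t) = (fun _ => 0).
  by apply: functional_extensionality => t; rewrite mul1r addr0.
rewrite mul1r => E; lra.
Qed.

Lemma ksym u v : k u v = k v u.
Proof.
have h1 := rkhs_repr HR u (rkhs_kmem HR v).
have h2 := rkhs_repr HR v (rkhs_kmem HR u).
by rewrite -h1 -h2 (rkhs_sym HR (rkhs_kmem HR v) (rkhs_kmem HR u)).
Qed.

Lemma sum_mem (I : Type) (r : seq I) (c : I -> R) (F : I -> T -> R) :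
  (forall i, Hs (F i)) -> Hs (fun u => \sum_(i <- r) c i * F i u).
Proof.
move=> hF; elim: r => [|i r IH].
  have -> : (fun u => \sum_(i <- [::]) c i * F i u) = (fun _ => 0).
    by apply: functional_extensionality => t; rewrite big_nil.
  exact: (rkhs_0 HR).
have -> : (fun u => \sum_(j <- i :: r) c j * F j u) =
   (fun u => c i * F i u + \sum_(j <- r) c j * F j u).
  by apply: functional_extensionality => t; rewrite big_cons.
exact: (rkhs_lin HR).
Qed.

Lemma sum_ipl (I : Type) (r : seq I) (c : I -> R) (F : I -> T -> R) h :
  (forall i, Hs (F i)) -> Hs h ->
  ip (fun u => \sum_(i <- r) c i * F i u) h = \sum_(i <- r) c i * ip (F i) h.
Proof.
move=> hF hh; elim: r => [|i r IH].
  have -> : (fun u => \sum_(i <- [::]) c i * F i u) = (fun _ => 0).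
    by apply: functional_extensionality => t; rewrite big_nil.
  by rewrite big_nil ip0l.
have -> : (fun u => \sum_(j <- i :: r) c j * F j u) =
   (fun u => c i * F i u + \sum_(j <- r) c j * F j u).
  by apply: functional_extensionality => t; rewrite big_cons.
by rewrite (rkhs_linl HR _ (hF i) (@sum_mem _ r c _ hF) hh) IH big_cons.
Qed.

End RK.
Arguments ip0l {R T k Hs ip} HR h _.
Arguments ksym {R T k Hs ip} HR u v.
Arguments sum_mem {R T k Hs ip} HR {I} r c F _.
Arguments sum_ipl {R T k Hs ip} HR {I} r c F h _ _.

Theorem theorem1 (R : realType) (D : nat) (Xs : 'rV[R]_D -> Prop)
  (k : {x : 'rV[R]_D | Xs x} -> {x : 'rV[R]_D | Xs x} -> R)
  (Hs : ({x : 'rV[R]_D | Xs x} -> R) -> Prop)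
  (ip : ({x : 'rV[R]_D | Xs x} -> R) -> ({x : 'rV[R]_D | Xs x} -> R) -> R)
  (s : {x : 'rV[R]_D | Xs x} -> R)
  (N : nat) (pts : 'I_N -> {x : 'rV[R]_D | Xs x})
  (eps : 'I_N -> R) (y : 'cV[R]_N) (sig_eps : R) :
  pd_kernel k ->
  is_RKHS k Hs ip ->
  Hs s ->
  injective pts ->
  (forall i, y i ord0 = s (pts i) + eps i) ->
  (forall i, eps i ^+ 2 < sig_eps ^+ 2) ->
  forall x : {x : 'rV[R]_D | Xs x},
    `|s x - gp_mean k pts y x| <=
      rkhs_norm ip s * power_fun k pts x
      + Num.sqrt (sig_eps ^+ 2 * N%:R * lebesgue_fun k pts x ^+ 2).
Proof.
move=> hpd HR hs hinj hy heps x.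
set K := gram k pts.
set kv := kvec k pts x.
have Kunit : K \in unitmx.
  rewrite unitmxE unitfE; apply/negP => /det0P [v vn0 vK].
  have := hpd N pts hinj v^T; rewrite trmx_eq0 => /(_ vn0).
  by rewrite trmxK -/K vK mul0mx mxE ltxx.
set a := invmx K *m kv.
have Ka : K *m a = kv by rewrite /a mulmxA mulmxV // mul1mx.
have KT : K^T = K by apply/matrixP => i j; rewrite !mxE (ksym HR).
have mean : gp_mean k pts y x = \sum_i a i ord0 * y i ord0.
  rewrite /gp_mean -/K -/kv.
  have -> : kv^T *m invmx K = a^T by rewrite /a trmx_mul trmx_inv KT.
  by rewrite mxE; apply: eq_bigr => i _; rewrite mxE.
have cov : gp_cov k pts x x = k x x - \sum_i a i ord0 * k x (pts i).
  rewrite /gp_cov -/K -/kv -mulmxA -/a mxE; congr (_ - _).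
  by apply: eq_bigr => i _; rewrite !mxE mulrC.
pose c : 'I_N -> R := fun i => a i ord0.
pose F := fun (i : 'I_N) u => k u (pts i).
have hF : forall i, Hs (F i) by move=> i; exact: (rkhs_kmem HR).
pose g := fun u => (-1) * (\sum_i c i * F i u) + k u x.
have hsum : Hs (fun u => \sum_i c i * F i u) := sum_mem HR _ c F hF.
have hg : Hs g := rkhs_lin HR (-1) hsum (rkhs_kmem HR x).
have ipg : forall h, Hs h ->
    ip g h = - \sum_i c i * ip (F i) h + ip (fun u => k u x) h.
  move=> h hh; rewrite /g (rkhs_linl HR (-1) hsum (rkhs_kmem HR x) hh).
  by rewrite (sum_ipl HR _ c F _ hF hh) mulN1r.
have ipk : forall h z, Hs h -> ip (fun u => k u z) h = h z.
  move=> h z hh; rewrite (rkhs_sym HR (rkhs_kmem HR z) hh).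
  exact: (rkhs_repr HR).
have gvan : forall j, g (pts j) = 0.
  move=> j; rewrite /g.
  have := congr1 (fun M : 'cV[R]_N => M j ord0) Ka; rewrite /= mxE /kv /kvec mxE => Kj.
  have E : \sum_i K j i * a i ord0 = \sum_i c i * F i (pts j).
    by apply: eq_bigr => i _; rewrite /c /F /K mxE mulrC.
  by rewrite mulN1r (ksym HR (pts j) x) -Kj E addNr.
have ipgg : ip g g = k x x - \sum_i c i * k x (pts i).
  rewrite ipg // ipk //.
  rewrite big1 ?oppr0 ?add0r; last by move=> i _; rewrite /F ipk // gvan mulr0.
  by rewrite /g mulN1r addrC.
have ipsg : ip s g = s x - \sum_i c i * s (pts i).
  rewrite (rkhs_sym HR hs hg) ipg // ipk // addrC; congr (_ - _).
  by apply: eq_bigr => i _; rewrite /F ipk.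
have quad1 : forall t, 0 <= ip g g * t ^+ 2 + 2 * ip s g * t + ip s s.
  move=> t.
  have hh : Hs (fun u => t * g u + s u) := rkhs_lin HR t hg hs.
  have := rkhs_pos HR hh.
  rewrite (rkhs_linl HR t hg hs hh).
  rewrite (rkhs_sym HR hg hh) (rkhs_sym HR hs hh).
  rewrite (rkhs_linl HR t hg hs hg) (rkhs_linl HR t hg hs hs).
  rewrite (rkhs_sym HR hg hs).
  have -> : t * (t * ip g g + ip s g) + (t * ip s g + ip s s)
    = ip g g * t ^+ 2 + 2 * ip s g * t + ip s s by ring.
  done.
have CS1 := quad_cs _ _ _ _ quad1 (rkhs_pos HR hg) (rkhs_pos HR hs).
have quad2 : forall t, 0 <= (\sum_i c i ^+ 2) * t ^+ 2
    + 2 * (\sum_i c i * eps i) * t + \sum_i eps i ^+ 2.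
  move=> t.
  have : 0 <= \sum_i (c i * t + eps i) ^+ 2 by apply: sumr_ge0 => i _; exact: sqr_ge0.
  have -> : \sum_i (c i * t + eps i) ^+ 2 =
     \sum_i ((c i ^+ 2) * t ^+ 2 + (2 * (c i * eps i)) * t + eps i ^+ 2).
    by apply: eq_bigr => i _; ring.
  by rewrite !big_split /= -!mulr_suml -mulr_sumr.
have CS2 := quad_cs _ _ _ _ quad2 (sumr_ge0 _ (fun i _ => sqr_ge0 (c i)))
   (sumr_ge0 _ (fun i _ => sqr_ge0 (eps i))).
have split : s x - gp_mean k pts y x = ip s g - \sum_i c i * eps i.
  rewrite mean ipsg.
  have -> : \sum_i a i ord0 * y i ord0 =
     \sum_i c i * s (pts i) + \sum_i c i * eps i.
    by rewrite -big_split; apply: eq_bigr => i _; rewrite hy mulrDr.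
  by rewrite opprD addrA.
rewrite split; apply: (le_trans (ler_normB _ _)); apply: lerD.
  rewrite /power_fun cov mulrC /rkhs_norm.
  by move: CS1; rewrite ipgg; apply.
apply: (le_trans CS2).
have hsN : 0 <= sig_eps ^+ 2 * N%:R by rewrite mulr_ge0 // sqr_ge0.
rewrite sqrtrM // sqrtr_sqr ger0_norm ?sqrtr_ge0 //.
rewrite /lebesgue_fun /eucl_norm -/K -/kv -/a mulrC.
apply: ler_wpM2r; first exact: sqrtr_ge0.
apply: ler_wsqrtr.
have -> : sig_eps ^+ 2 * N%:R = \sum_(i < N) sig_eps ^+ 2.
  by rewrite sumr_const card_ord mulr_natr.
by apply: ler_sum => i _; apply: ltW.
Qed.
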